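(* Suppose $G$ acts transitively on $S$. Then for every $\sigma$-finite jointly invariant measure $M$ on $S\times S$ and every $B\in\mathcal S$, $$\int\tilde\Delta(s,t)\mathbf 1_B(s)\,M(d(s,t))=\int\mathbf 1_B(t)\,M(d(s,t)),$$ where $\tilde\Delta(s,t)=\Delta(g^{-1})$ for any $g\in G$ with $gs=t$.
   Context: $G$ is a locally compact second countable Hausdorff group with left Haar measure $\lambda$ and modular function $\Delta$ ($\int f(gh)\lambda(dg)=\Delta(h^{-1})\int f\,d\lambda$). $(S,\mathcal S)$ is a Borel space on which $G$ acts measurably and properly (with $\mu_s$ the image of $\lambda$ under $g\mapsto gs$, there is a measurable partition $B_1,B_2,\dots$ of $S$ with $\mu_s(B_n)<\infty$ for all $s,n$); under properness $\Delta(g^{-1})$ does not depend on the choice of $g$ with $gs=t$. Transitive means $Gs=S$ for some (all) $s$. $M$ jointly invariant means $M(\{(gs,gt):(s,t)\in A\})=M(A)$ for all $g$ and measurable $A$. *)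

(* Defs.v *)
From HB Require Import structures.
From mathcomp Require Import all_boot all_order all_algebra.
From mathcomp Require Import all_classical all_reals all_analysis measurable_realfun.
Set Implicit Arguments. Unset Strict Implicit. Unset Printing Implicit Defensive.
Import Order.TTheory GRing.Theory Num.Theory.
Local Open Scope classical_set_scope.
Local Open Scope ring_scope.

Notation borel T := (g_sigma_algebraType (@open T)).

Definition lcsc_group (G : ptopologicalType) (mul : G -> G -> G) (one : G)
  (inv : G -> G) : Prop :=
  [/\ (forall x y z, mul x (mul y z) = mul (mul x y) z),
      (forall x, mul one x = x /\ mul x one = x),
      (forall x, mul (inv x) x = one /\ mul x (inv x) = one),
      continuous (fun p : G * G => mul p.1 p.2) /\ continuous inv &
      [/\ hausdorff_space G, locally_compact [set: G] & @second_countable G]].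

(* lam is a left Haar measure on the Borel sets of G: a nonzero, left
   invariant Borel measure that is finite on compact sets (for an lcsc group
   such a measure is automatically Radon). *)
Definition left_haar (R : realType) (G : ptopologicalType) (mul : G -> G -> G)
  (lam : {measure set (borel G) -> \bar R}) : Prop :=
  [/\ (forall (g : G) (A : set (borel G)), measurable A ->
         lam [set mul g x | x in A] = lam A),
      (forall K : set G, compact K -> (lam K < +oo)%E) &
      (lam [set: borel G] != 0)%E].

Definition modular_function (R : realType) (G : ptopologicalType)
  (mul : G -> G -> G) (inv : G -> G)
  (lam : {measure set (borel G) -> \bar R}) (Delta : G -> R) : Prop :=
  forall (f : borel G -> \bar R), (forall x, (0 <= f x)%E) ->
    measurable_fun [set: borel G] f ->
    forall h : G,
      (\int[lam]_g f (mul g h) = (Delta (inv h))%:E * \int[lam]_g f g)%E.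

Definition borel_space (R : realType) d (S : measurableType d) : Prop :=
  exists f : S -> R,
    [/\ measurable_fun [set: S] f, injective f,
        measurable (f @` [set: S]) /\ f @` [set: S] `<=` `[0, 1]%classic &
        (forall A : set S, measurable A -> measurable (f @` A))].

Definition measurable_action (G : ptopologicalType) (mul : G -> G -> G)
  (one : G) d (S : measurableType d) (act : G -> S -> S) : Prop :=
  [/\ measurable_fun [set: (borel G * S)%type]
        (fun p : borel G * S => act p.1 p.2),
      (forall s, act one s = s) &
      (forall g h s, act (mul g h) s = act g (act h s))].

Definition orbit_measure (R : realType) (G : ptopologicalType)
  (lam : {measure set (borel G) -> \bar R}) d (S : measurableType d)
  (act : G -> S -> S) (s : S) (B : set S) : \bar R :=
  lam [set g : borel G | B (act g s)].

Definition proper_action (R : realType) (G : ptopologicalType)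
  (lam : {measure set (borel G) -> \bar R}) d (S : measurableType d)
  (act : G -> S -> S) : Prop :=
  exists B : nat -> set S,
    [/\ (forall n, measurable (B n)), trivIset [set: nat] B,
        \bigcup_n B n = [set: S] &
        (forall s n, (orbit_measure lam act s (B n) < +oo)%E)].

Definition transitive_action (G : ptopologicalType) d (S : measurableType d)
  (act : G -> S -> S) : Prop :=
  exists s : S, forall t : S, exists g : G, act g s = t.

Definition jointly_invariant (R : realType) (G : ptopologicalType) d
  (S : measurableType d) (act : G -> S -> S)
  (M : {measure set (S * S)%type -> \bar R}) : Prop :=
  forall (g : G) (A : set (S * S)%type), measurable A ->
    M [set (act g p.1, act g p.2) | p in A] = M A.

Definition Delta_tilde (R : realType) (G : ptopologicalType) (one : G)
  (inv : G -> G) (Delta : G -> R) d (S : measurableType d)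
  (act : G -> S -> S) (s t : S) : R :=
  Delta (inv (xget one [set g : G | act g s = t])).

(* Main.v *)
Require Import Defs.
From HB Require Import structures.
From mathcomp Require Import all_boot all_order all_algebra.
From mathcomp Require Import all_classical all_reals all_analysis measurable_realfun.
Import Order.TTheory GRing.Theory Num.Theory.
Local Open Scope classical_set_scope.
Local Open Scope ring_scope.

Lemma cont_meas (G : ptopologicalType) (f : G -> G) : continuous f ->
  measurable_fun [set: borel G] (f : borel G -> borel G).
Proof.
move=> cf.
have := @measurability _ _ (borel G) (borel G) setT f (@open G).
move=> h; apply: h; first by [].
move=> _ [U oU <-]; apply: sub_sigma_algebra.
by rewrite setTI; move/continuousP : cf; apply.
Qed.

Lemma cont_left (G : ptopologicalType) (mul : G -> G -> G) (h : G) :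
  continuous (fun p : G * G => mul p.1 p.2) -> continuous (mul h).
Proof.
move=> cm x.
apply: (@continuous_comp _ _ _ (fun g => (h, g)) (fun p : G * G => mul p.1 p.2)).
  by apply: cvg_pair; [exact: cvg_cst | exact: cvg_id].
exact: cm.
Qed.

Section Main.
Context (R : realType) (G : ptopologicalType) (mul : G -> G -> G) (one : G) (inv : G -> G)
  (lam : {measure set (borel G) -> \bar R}) (Delta : G -> R)
  (d : measure_display) (S : measurableType d) (act : G -> S -> S).
Hypothesis act_one : forall s, act one s = s.
Hypothesis act_mul : forall g h s, act (mul g h) s = act g (act h s).
Hypothesis mul_inv : forall x, mul (inv x) x = one /\ mul x (inv x) = one.
Hypothesis mulA : forall x y z, mul x (mul y z) = mul (mul x y) z.
Hypothesis mul1 : forall x, mul one x = x /\ mul x one = x.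
Hypothesis mact : measurable_fun [set: (borel G * S)%type]
        (fun p : borel G * S => act p.1 p.2).
Hypothesis minv : measurable_fun [set: borel G] (inv : borel G -> borel G).
Hypothesis mleft : forall h, measurable_fun [set: borel G] (mul h : borel G -> borel G).
Hypothesis lam_left : forall (g : G) (A : set (borel G)), measurable A ->
         lam [set mul g x | x in A] = lam A.
Hypothesis Hmod : modular_function mul inv lam Delta.
Variable M : {measure set (S * S)%type -> \bar R}.
Hypothesis Msf : sigma_finite setT M.
Hypothesis Minv : jointly_invariant act M.
Variable s0 : S.
Hypothesis Htr : forall t, exists g, act g s0 = t.
Variable Bn : set S.
Hypothesis mBn : measurable Bn.
Hypothesis lam_sf : sigma_finite setT lam.
Hypothesis Z0fin : (lam [set g : borel G | Bn (act g s0)] < +oo)%E.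
Hypothesis Z0pos : (0 < lam [set g : borel G | Bn (act g s0)])%E.

Definition lamS := (lam : set (borel G) -> \bar R).
HB.instance Definition _ := Measure.on lamS.
HB.instance Definition _ := Measure_isSigmaFinite.Build _ _ _ lamS lam_sf.
Definition MS := (M : set (S * S)%type -> \bar R).
HB.instance Definition _ := Measure.on MS.
HB.instance Definition _ := Measure_isSigmaFinite.Build _ _ _ MS Msf.

Lemma tonelli (f : (S * S) * borel G -> \bar R) : measurable_fun setT f ->
  (forall x, 0 <= f x)%E ->
  (\int[M]_x \int[lam]_y f (x, y) = \int[lam]_y \int[M]_x f (x, y))%E.
Proof. by move=> mf f0; exact: (@fubini_tonelli _ _ _ _ _ MS lamS f mf). Qed.

Lemma actK g s : act g (act (inv g) s) = s.
Proof. by rewrite -act_mul (mul_inv g).2 act_one. Qed.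

Lemma actVK g s : act (inv g) (act g s) = s.
Proof. by rewrite -act_mul (mul_inv g).1 act_one. Qed.

Lemma act_invM h g u : act (inv (mul h g)) (act h u) = act (inv g) u.
Proof. by rewrite -{1}(actK g u) -(act_mul h g) actVK. Qed.

Lemma mactg u : measurable_fun [set: borel G] (fun g : borel G => act g u).
Proof. exact: (measurable_fun_pair1 u mact). Qed.

Lemma mach h : measurable_fun [set: S] (act h).
Proof. exact: (measurable_fun_pair2 (h : borel G) mact). Qed.

Lemma mact2 d' (T : measurableType d') (h1 : T -> borel G) (h2 : T -> S) :
  measurable_fun setT h1 -> measurable_fun setT h2 ->
  measurable_fun setT (fun x => act (h1 x) (h2 x)).
Proof.
move=> m1 m2.
apply: (@measurableT_comp _ _ _ _ _ _ (fun p : borel G * S => act p.1 p.2) _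
   (fun x => (h1 x, h2 x)) mact).
exact: measurable_fun_pair.
Qed.

Definition q (u : S) : R := \1_Bn u.

Lemma q_ge0 u : 0 <= q u.
Proof. by rewrite /q indicE; case: (_ \in _). Qed.

Lemma mq : measurable_fun [set: S] q.
Proof. exact: measurable_indic. Qed.

Definition Zi (u : S) : \bar R := (\int[lam]_g (q (act g u))%:E)%E.

Lemma Zi_s0 : Zi s0 = lam [set g : borel G | Bn (act g s0)].
Proof.
rewrite /Zi -[X in lam X]setIT -integral_indic//; last first.
  rewrite -[X in measurable X]setTI; exact: (mactg s0).
Qed.

Lemma Zmod k u : Zi (act k u) = ((Delta (inv k))%:E * Zi u)%E.
Proof.
rewrite /Zi -Hmod//.
- by apply: eq_integral => g _; rewrite act_mul.
- by move=> x; rewrite lee_fin q_ge0.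
- by apply/measurable_EFinP; apply: measurableT_comp; [exact: mq| exact: mactg].
Qed.

Lemma Zi_ge0 u : (0 <= Zi u)%E.
Proof. by apply: integral_ge0 => g _; rewrite lee_fin q_ge0. Qed.

Lemma Zi_fin u : Zi u \is a fin_num.
Proof.
have [b <-] := Htr u; rewrite Zmod fin_numM// Zi_s0 ge0_fin_numE//.
Qed.

Definition Zr u : R := fine (Zi u).

Lemma ZrE u : Zi u = (Zr u)%:E.
Proof. by rewrite /Zr fineK// Zi_fin. Qed.

Lemma Zr_gt0 u : 0 < Zr u.
Proof.
have [b hb] := Htr u.
have h : Zi s0 = ((Delta (inv (inv b)))%:E * Zi u)%E.
  by rewrite -Zmod -hb actVK.
have := Zi_ge0 u; rewrite ZrE lee_fin le_eqVlt => /predU1P[h0|//].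
move: Z0pos; rewrite -Zi_s0 h ZrE -h0 mule0.
by rewrite ltxx.
Qed.

Lemma Zr_act k u : Zr (act k u) = Delta (inv k) * Zr u.
Proof. by have := Zmod k u; rewrite !ZrE -EFinM => -[]. Qed.

Lemma Zr_ratio k s t : Zr (act k t) / Zr (act k s) = Zr t / Zr s.
Proof.
have hD : Delta (inv k) != 0.
  apply/eqP => h0; have := Zr_gt0 (act k s); rewrite Zr_act h0 mul0r.
  by rewrite ltxx.
have := Zr_gt0 s; have := Zr_gt0 t => ht hs.
by rewrite !Zr_act invfM mulrACA divff// mul1r.
Qed.

Lemma mZi : measurable_fun [set: S] Zi.
Proof.
have mf : measurable_fun [set: (S * borel G)%type]
    (fun x : S * borel G => (q (act x.2 x.1))%:E).
  apply/measurable_EFinP; apply: measurableT_comp; first exact: mq.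
  by apply: mact2; [exact: measurable_snd|exact: measurable_fst].
have := @measurable_fun_fubini_tonelli_F _ _ S _ R lamS _ mf.
by apply => x; rewrite lee_fin q_ge0.
Qed.

Lemma mZr : measurable_fun [set: S] Zr.
Proof. by apply: measurableT_comp mZi; exact: fine_measurable. Qed.

Lemma mZrV : measurable_fun [set: S] (fun u => (Zr u)^-1).
Proof.
have -> : (fun u => (Zr u)^-1) = expR \o (\- (fun u => ln (Zr u))).
  apply/funext => u /=; rewrite expRN lnK//; rewrite posrE; exact: Zr_gt0.
apply: measurableT_comp; first exact: measurable_expR.
apply: measurable_funN.
apply: measurableT_comp; first exact: measurable_ln.
exact: mZr.
Qed.

Definition ga h (p : S * S) : S * S := (act h p.1, act h p.2).

Lemma mga h : measurable_fun [set: (S * S)%type] (ga h).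
Proof.
apply: measurable_fun_pair.
  exact: (measurableT_comp (mach h) measurable_fst).
exact: (measurableT_comp (mach h) measurable_snd).
Qed.

Lemma M_inv_int h (psi : S * S -> \bar R) : measurable_fun setT psi ->
  (forall p, 0 <= psi p)%E -> (\int[M]_p psi p = \int[M]_p psi (ga h p))%E.
Proof.
move=> mpsi psi0.
have e A : measurable A -> pushforward M (ga h) A = M A.
  move=> mA; rewrite /pushforward.
  have -> : ga h @^-1` A = [set (act (inv h) p.1, act (inv h) p.2) | p in A].
    apply/seteqP; split => [x /= Ax|_ [p Ap <-]].
      by exists (ga h x) => //; rewrite /= !actVK -surjective_pairing.
    by rewrite /ga /= !actK -surjective_pairing.
  exact: Minv.
have := ge0_integral_pushforward (mga h) M measurableT mpsi (fun y _ => psi0 y).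
rewrite preimage_setT => h1.
have -> : (\int[M]_p psi (ga h p) = \int[M]_p (psi \o ga h) p)%E by [].
rewrite -h1.
apply: eq_measure_integral; first exact: mga.
move=> mf A mA _; exact: (esym (e A mA)).
Qed.

Lemma lam_left_int h (psi : borel G -> \bar R) : measurable_fun setT psi ->
  (forall g, 0 <= psi g)%E -> (\int[lam]_g psi g = \int[lam]_g psi (mul h g))%E.
Proof.
move=> mpsi psi0.
have e (A : set (borel G)) : measurable A -> pushforward lam (mul h : borel G -> borel G) A = lam A.
  move=> mA; rewrite /pushforward.
  have -> : (mul h : borel G -> borel G) @^-1` A = [set mul (inv h) x | x in A].
    apply/seteqP; split => [x /= Ax|_ [p Ap <-]].
      by exists (mul h x) => //; rewrite mulA (mul_inv h).1 (mul1 x).1.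
    by rewrite /= mulA (mul_inv h).2 (mul1 p).1.
  exact: lam_left.
have := ge0_integral_pushforward (mleft h) lam measurableT mpsi (fun y _ => psi0 y).
rewrite preimage_setT => h1.
have -> : (\int[lam]_g psi (mul h g) = \int[lam]_g (psi \o mul h) g)%E by [].
rewrite -h1.
apply: eq_measure_integral.
move=> A mA _; exact: (esym (e A mA)).
Qed.

Lemma mZrVact d' (T : measurableType d') (h1 : T -> borel G) (h2 : T -> S) :
  measurable_fun setT h1 -> measurable_fun setT h2 ->
  measurable_fun setT (fun x => ((Zr (act (h1 x) (h2 x)))^-1)%:E).
Proof.
move=> m1 m2; apply/measurable_EFinP.
exact: (measurableT_comp mZrV (@mact2 _ _ h1 h2 m1 m2)).
Qed.

Lemma mindact d' (T : measurableType d') (B : set S) (h1 : T -> borel G) (h2 : T -> S) :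
  measurable B -> measurable_fun setT h1 -> measurable_fun setT h2 ->
  measurable_fun setT (fun x => (\1_B (act (h1 x) (h2 x)) : R)%:E).
Proof.
move=> mB m1 m2; apply/measurable_EFinP.
apply: (@measurableT_comp _ _ _ _ _ _ (\1_B : S -> R)); first exact: measurable_indic.
exact: (@mact2 _ _ h1 h2 m1 m2).
Qed.

Lemma ind_ge0 (B : set S) u : (0 <= (\1_B u : R)%:E)%E.
Proof. by rewrite lee_fin indicE; case: (_ \in _). Qed.

Definition J (B : set S) (u : S) : \bar R :=
  (\int[lam]_g (((Zr (act (inv g) u))^-1)%:E * (\1_B (act (inv g) u) : R)%:E))%E.

Lemma J_act B h u : measurable B -> J B (act h u) = J B u.
Proof.
move=> mB; rewrite /J (lam_left_int h).
- by apply: eq_integral => g _; rewrite act_invM.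
- apply: emeasurable_funM.
    by apply: mZrVact => //; exact: minv.
  by apply: mindact => //; exact: minv.
- move=> g; apply: mule_ge0; last exact: ind_ge0.
  by rewrite lee_fin invr_ge0 ltW// Zr_gt0.
Qed.

Lemma J_cst B u : measurable B -> J B u = J B s0.
Proof. by move=> mB; have [b <-] := Htr u; rewrite J_act. Qed.

Lemma Zr_neq0 u : Zr u != 0.
Proof. by rewrite gt_eqF// Zr_gt0. Qed.

Lemma K (Phi : S * S -> \bar R) : measurable_fun setT Phi -> (forall p, 0 <= Phi p)%E ->
  (\int[M]_p Phi p = \int[M]_p ((q p.1)%:E *
     \int[lam]_g (((Zr (act (inv g) p.1))^-1)%:E * Phi (ga (inv g) p))))%E.
Proof.
move=> mPhi Phi0.
have mF2 : measurable_fun setT (fun x : (S * S) * borel G =>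
    ((q (act x.2 x.1.1) * (Zr x.1.1)^-1)%:E * Phi x.1)%E).
  apply: emeasurable_funM; last exact: (measurableT_comp mPhi measurable_fst).
  apply/measurable_EFinP; apply: measurable_funM.
    apply: (@measurableT_comp _ _ _ _ _ _ q); first exact: mq.
    by apply: mact2; [exact: measurable_snd|
      exact: (measurableT_comp measurable_fst measurable_fst)].
  exact: (measurableT_comp mZrV (measurableT_comp measurable_fst measurable_fst)).
have mF4 : measurable_fun setT (fun x : (S * S) * borel G =>
    ((q x.1.1 * (Zr (act (inv x.2) x.1.1))^-1)%:E * Phi (ga (inv x.2) x.1))%E).
  apply: emeasurable_funM.
    apply/measurable_EFinP; apply: measurable_funM.
      exact: (measurableT_comp mq (measurableT_comp measurable_fst measurable_fst)).
    apply: (@measurableT_comp _ _ _ _ _ _ (fun u => (Zr u)^-1)); first exact: mZrV.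
    by apply: mact2; [exact: (measurableT_comp minv measurable_snd)|
      exact: (measurableT_comp measurable_fst measurable_fst)].
  apply: (measurableT_comp mPhi); apply: measurable_fun_pair.
    by apply: mact2; [exact: (measurableT_comp minv measurable_snd)|
      exact: (measurableT_comp measurable_fst measurable_fst)].
  by apply: mact2; [exact: (measurableT_comp minv measurable_snd)|
    exact: (measurableT_comp measurable_snd measurable_fst)].
transitivity (\int[M]_p \int[lam]_g ((q (act g p.1) * (Zr p.1)^-1)%:E * Phi p))%E.
  apply: eq_integral => p _.
  rewrite ge0_integralZr//; last 2 first.
  - apply/measurable_EFinP; apply: measurable_funM; last exact: measurable_cst.
    apply: (@measurableT_comp _ _ _ _ _ _ q); first exact: mq.
    exact: mactg.
  - by move=> g _; rewrite lee_fin mulr_ge0// ?q_ge0// invr_ge0 ltW// Zr_gt0.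
  under eq_integral do rewrite EFinM.
  rewrite ge0_integralZr//; last 3 first.
  - apply/measurable_EFinP.
    apply: (@measurableT_comp _ _ _ _ _ _ q); first exact: mq.
    exact: mactg.
  - by move=> g _; rewrite lee_fin q_ge0.
  - by rewrite lee_fin invr_ge0 ltW// Zr_gt0.
  by rewrite -/(Zi p.1) ZrE -EFinM divff ?Zr_neq0// mul1e.
rewrite (tonelli (fun x => ((q (act x.2 x.1.1) * (Zr x.1.1)^-1)%:E * Phi x.1)%E))//; last first.
  by move=> x; apply: mule_ge0 => //; rewrite lee_fin mulr_ge0// ?q_ge0// invr_ge0 ltW// Zr_gt0.
transitivity (\int[lam]_g \int[M]_p
    ((q p.1 * (Zr (act (inv g) p.1))^-1)%:E * Phi (ga (inv g) p)))%E.
  apply: eq_integral => g _.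
  rewrite (M_inv_int (inv g)).
  - by apply: eq_integral => p _; rewrite /ga /= actK.
  - exact: (measurable_fun_pair1 g mF2).
  - by move=> p; apply: mule_ge0 => //; rewrite lee_fin mulr_ge0// ?q_ge0// invr_ge0 ltW// Zr_gt0.
rewrite -(tonelli (fun x => ((q x.1.1 * (Zr (act (inv x.2) x.1.1))^-1)%:E * Phi (ga (inv x.2) x.1))%E))//; last first.
  by move=> x; apply: mule_ge0 => //; rewrite lee_fin mulr_ge0// ?q_ge0// invr_ge0 ltW// Zr_gt0.
apply: eq_integral => p _.
under eq_integral do rewrite EFinM -muleA.
rewrite /= ge0_integralZl//.
- apply: emeasurable_funM.
    apply/measurable_EFinP.
    apply: (@measurableT_comp _ _ _ _ _ _ (fun u => (Zr u)^-1)); first exact: mZrV.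
    by apply: mact2; [exact: minv| exact: measurable_cst].
  apply: (measurableT_comp mPhi); apply: measurable_fun_pair.
    by apply: mact2; [exact: minv| exact: measurable_cst].
  by apply: mact2; [exact: minv| exact: measurable_cst].
- by move=> g _; apply: mule_ge0 => //; rewrite lee_fin invr_ge0 ltW// Zr_gt0.
- by rewrite lee_fin q_ge0.
Qed.

Lemma final (B : set S) : measurable B ->
  (\int[M]_p ((Zr p.2 / Zr p.1)%:E * (\1_B p.1 : R)%:E)
   = \int[M]_p (\1_B p.2 : R)%:E)%E.
Proof.
move=> mB.
have mJ u : measurable_fun setT (fun g : borel G =>
    (((Zr (act (inv g) u))^-1)%:E * (\1_B (act (inv g) u) : R)%:E)%E).
  apply: emeasurable_funM.
    by apply: mZrVact; [exact: minv| exact: measurable_cst].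
  by apply: mindact; [exact: mB| exact: minv| exact: measurable_cst].
have J0 u (g : borel G) : (0 <= ((Zr (act (inv g) u))^-1)%:E * (\1_B (act (inv g) u) : R)%:E)%E.
  by apply: mule_ge0; [rewrite lee_fin invr_ge0 ltW// Zr_gt0| exact: ind_ge0].
have r0 (p : S * S) : (0 <= (Zr p.2 / Zr p.1)%:E)%E.
  by rewrite lee_fin divr_ge0// ltW// Zr_gt0.
rewrite K; last 2 first.
- apply: emeasurable_funM.
    apply/measurable_EFinP; apply: measurable_funM.
      exact: (measurableT_comp mZr measurable_snd).
    exact: (measurableT_comp mZrV measurable_fst).
  apply/measurable_EFinP.
  apply: (@measurableT_comp _ _ _ _ _ _ (\1_B : S -> R)); first exact: measurable_indic.
  exact: measurable_fst.
- by move=> p; apply: mule_ge0 => //; exact: ind_ge0.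
rewrite [RHS]K; last 2 first.
- apply/measurable_EFinP.
  apply: (@measurableT_comp _ _ _ _ _ _ (\1_B : S -> R)); first exact: measurable_indic.
  exact: measurable_snd.
- by move=> p; exact: ind_ge0.
apply: eq_integral => p _; congr (_ * _)%E.
transitivity ((Zr p.2 / Zr p.1)%:E * J B p.1)%E.
  rewrite /J -ge0_integralZl//.
  apply: eq_integral => g _; rewrite /ga /= Zr_ratio.
  by rewrite muleCA.
transitivity ((Zr p.2 / Zr p.1)%:E * J B p.2)%E.
  by rewrite (J_cst B p.1 mB) (J_cst B p.2 mB).
rewrite /J -ge0_integralZl//.
apply: eq_integral => g _; rewrite /ga /= muleA -EFinM.
rewrite EFinM; congr (_ * _)%E; congr (_%:E).
by rewrite -(Zr_ratio (inv g) p.1 p.2) mulrAC divff ?Zr_neq0// mul1r.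
Qed.

Lemma DT s t : Delta_tilde one inv Delta act s t = Zr t / Zr s.
Proof.
rewrite /Delta_tilde; set g0 := xget one _.
have hg : act g0 s = t.
  rewrite /g0; apply: (@xgetPex _ one [set g | act g s = t]).
  have [a ha] := Htr s; have [b hb] := Htr t.
  by exists (mul b (inv a)); rewrite /= act_mul -ha actVK hb.
by rewrite -hg Zr_act mulfK// Zr_neq0.
Qed.

Lemma main_sec (B : set S) : measurable B ->
  (\int[M]_p ((Delta_tilde one inv Delta act p.1 p.2)%:E * (\1_B p.1)%:E)
   = \int[M]_p (\1_B p.2)%:E)%E.
Proof.
move=> mB; rewrite -final//; apply: eq_integral => p _; by rewrite DT.
Qed.
End Main.

Theorem corollary6p2 (R : realType) (G : ptopologicalType)
  (mul : G -> G -> G) (one : G) (inv : G -> G)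
  (lam : {measure set (borel G) -> \bar R}) (Delta : G -> R)
  (d : measure_display) (S : measurableType d) (act : G -> S -> S) :
  lcsc_group mul one inv ->
  left_haar mul lam ->
  modular_function mul inv lam Delta ->
  borel_space R S ->
  measurable_action mul one act ->
  proper_action lam act ->
  transitive_action act ->
  forall (M : {measure set (S * S)%type -> \bar R}),
    sigma_finite [set: (S * S)%type] M ->
    jointly_invariant act M ->
    forall B : set S, measurable B ->
      (\int[M]_p ((Delta_tilde one inv Delta act p.1 p.2)%:E * (\1_B p.1)%:E)
       = \int[M]_p (\1_B p.2)%:E)%E.
Proof.
move=> [mulA mul1 mul_inv [cmul cinv] _] [lam_left _ lamT] Hmod _ [mact act_one act_mul]
  [Bs [mBs _ cBs finBs]] [s0 Htr] M Msf Minv B mB.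
have minv := @cont_meas G inv cinv.
have mleft h := @cont_meas G (mul h) (@cont_left G mul h cmul).
have mF i : measurable [set g : borel G | Bs i (act g s0)].
  have := measurable_fun_pair1 s0 mact measurableT (mBs i).
  by rewrite setTI.
have lam_sf : sigma_finite [set: borel G] lam.
  exists (fun i => [set g : borel G | Bs i (act g s0)]).
    apply/seteqP; split => // g _.
    have : [set: S] (act g s0) by [].
    by rewrite -cBs => -[i _ hi]; exists i.
  by move=> i; split; [exact: mF| exact: finBs].
have [n0 pos] : exists n, (0 < lam [set g : borel G | Bs n (act g s0)])%E.
  apply/not_existsP => hn.
  have h0 n : lam [set g : borel G | Bs n (act g s0)] = 0%E.
    apply/eqP; rewrite eq_le measure_ge0 andbT leNgt; apply/negP; exact: hn.
  move/eqP: lamT; apply.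
  apply/eqP; rewrite eq_le measure_ge0 andbT.
  rewrite -(@eseries0 _ (fun n => lam [set g : borel G | Bs n (act g s0)]) 0%N xpredT)//.
  apply: measure_sigma_subadditive => //.
  move=> g _; have : [set: S] (act g s0) by [].
  by rewrite -cBs => -[i _ hi]; exists i.
exact: (@main_sec R G mul one inv lam Delta d S act act_one act_mul mul_inv mulA mul1
  mact minv mleft lam_left Hmod M Msf Minv s0 Htr (Bs n0) (mBs n0) lam_sf (finBs s0 n0) pos B mB).
Qed.
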